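(* Let $L$ be a pentagonal linkage and let $q_1,q_2,q_4>0$ be fixed. Place charges $(q_1,q_2,t,q_4,s)$ at the vertices $A_1,\dots,A_5$, giving the effective Coulomb potential $$E=\frac{q_1q_4}{|A_1A_4|}+\frac{q_2q_4}{|A_2A_4|}+\frac{q_1t}{|A_1A_3|}+\frac{q_2s}{|A_2A_5|}+\frac{st}{|A_3A_5|}.$$ Then for each convex configuration $P\in M^C(L)$ there exists exactly one pair $(s,t)\in(\mathbb{R}_{>0})^2$ such that $P$ is a critical point of $E$ on $M(L)$.
   Context: A pentagonal linkage $L$ is given by side lengths $a_1,\dots,a_5>0$; $M(L)$ is the set of planar 5-gons $(A_1,\dots,A_5)$ with $|A_iA_{i+1}|=a_i$ (indices mod 5) modulo all isometries of $\mathbb{R}^2$. $M^C(L)$ is the set of strictly convex configurations (convex pentagon $A_1\dots A_5$ in this cyclic order, no angle equal to $\pi$); near such points $M(L)$ is a smooth surface, and a critical point means the differential of $E$ restricted to $M(L)$ vanishes there. *)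

(* Defs.v *)
From Stdlib Require Import Reals Lra.
From Coquelicot Require Import Coquelicot.
Open Scope R_scope.

(* A planar 5-gon (A_1,...,A_5) is represented by P : nat -> R*R with
   A_{k+1} = P k for k = 0..4 (values at other indices are irrelevant). *)
Definition config := nat -> (R * R).

Definition dist (p q : R * R) : R :=
  sqrt ((fst p - fst q) ^ 2 + (snd p - snd q) ^ 2).

Definition nxt (i : nat) : nat := Nat.modulo (S i) 5.

(* P lies in (a representative of) M(L): |A_i A_{i+1}| = a_i (indices mod 5). *)
Definition in_linkage (a : nat -> R) (P : config) : Prop :=
  forall i, (i < 5)%nat -> dist (P i) (P (nxt i)) = a i.

Definition cross (u v : R * R) : R := fst u * snd v - snd u * fst v.
Definition vsub (p q : R * R) : R * R := (fst p - fst q, snd p - snd q).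

(* Strictly convex pentagon A_1...A_5 in this cyclic order (no angle = pi):
   for every side A_i A_{i+1}, all other vertices lie strictly on one and the
   same side (the same side for all i, given by the orientation sgn). *)
Definition strictly_convex (P : config) : Prop :=
  exists sgn : R, (sgn = 1 \/ sgn = -1) /\
    forall i j, (i < 5)%nat -> (j < 5)%nat -> j <> i -> j <> nxt i ->
      0 < sgn * cross (vsub (P (nxt i)) (P i)) (vsub (P j) (P i)).

Definition energy (q1 q2 q4 s t : R) (P : config) : R :=
  q1 * q4 / dist (P 0%nat) (P 3%nat) + q2 * q4 / dist (P 1%nat) (P 3%nat)
  + q1 * t / dist (P 0%nat) (P 2%nat) + q2 * s / dist (P 1%nat) (P 4%nat)
  + s * t / dist (P 2%nat) (P 4%nat).

Definition perturb (P v : config) (h : R) : config :=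
  fun i => (fst (P i) + h * fst (v i), snd (P i) + h * snd (v i)).

(* P is a critical point of f on M(L): the differential of f vanishes on the
   tangent space of the constraint set {|A_iA_{i+1}| = a_i}, i.e. on every
   direction v along which all side lengths are stationary to first order.
   (f is isometry invariant, so this is criticality on the quotient M(L),
   which is smooth near strictly convex configurations.) *)
Definition critical_on_linkage (f : config -> R) (P : config) : Prop :=
  forall v : config,
    (forall i, (i < 5)%nat ->
       is_derive (fun h => dist (perturb P v h i) (perturb P v h (nxt i))) 0 0) ->
    is_derive (fun h => f (perturb P v h)) 0 0.

(* Main.v *)
Require Import Defs.
From Stdlib Require Import Reals Lra Lia Psatz.
From Coquelicot Require Import Coquelicot.
Open Scope R_scope.
Definition kk (p q u w : R*R) := (fst p - fst q)*(fst u - fst w) + (snd p - snd q)*(snd u - snd w).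

Lemma is_derive_val (f : R -> R) (x l l' : R) : is_derive f x l -> l = l' -> is_derive f x l'.
Proof. intros H ->; exact H. Qed.

Lemma sqrt_pos_arg x : 0 < sqrt x -> 0 < x.
Proof. intros H. destruct (Rle_lt_dec x 0) as [h|h]; auto. rewrite sqrt_neg_0 in H; lra. Qed.

Lemma dist_deriv_real (X Y A B : R) : 0 < sqrt (X^2 + Y^2) ->
  is_derive (fun h => sqrt ((X + h*A)^2 + (Y + h*B)^2)) 0 ((X*A+Y*B)/sqrt(X^2+Y^2)).
Proof.
  intros H. pose proof (sqrt_pos_arg _ H) as HS.
  assert (Hf : is_derive (fun h => (X + h*A)^2 + (Y + h*B)^2) 0 (2*(X*A+Y*B))).
  { auto_derive; auto; ring. }
  eapply is_derive_val. apply (is_derive_sqrt _ _ _ Hf).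
  - replace ((X + 0*A)^2 + (Y+0*B)^2) with (X^2+Y^2) by ring. exact HS.
  - replace ((X + 0*A)^2 + (Y+0*B)^2) with (X^2+Y^2) by ring. change (2 * (X*A+Y*B) / (2 * sqrt (X^2+Y^2)) = (X*A+Y*B)/sqrt(X^2+Y^2)). field. lra.
Qed.

Lemma dist_pert_deriv (P v : config) i j : 0 < Defs.dist (P i) (P j) ->
  is_derive (fun h => Defs.dist (perturb P v h i) (perturb P v h j)) 0 (kk (P i) (P j) (v i) (v j) / Defs.dist (P i) (P j)).
Proof.
  unfold Defs.dist, perturb, kk; simpl. intros Hd.
  pose proof (dist_deriv_real _ _ (fst (v i) - fst (v j)) (snd (v i) - snd (v j)) Hd) as H.
  refine (is_derive_ext _ _ _ _ _ H).
  intros h; simpl. f_equal. ring.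
Qed.

Lemma dist_pert0 (P v : config) i j : Defs.dist (perturb P v 0 i) (perturb P v 0 j) = Defs.dist (P i) (P j).
Proof. unfold Defs.dist, perturb; simpl. f_equal. ring. Qed.

Lemma inv_dist_deriv (P v : config) i j c : 0 < Defs.dist (P i) (P j) ->
  is_derive (fun h => c / Defs.dist (perturb P v h i) (perturb P v h j)) 0
    (- (c / Defs.dist (P i) (P j) ^ 3 * kk (P i) (P j) (v i) (v j))).
Proof.
  intros Hd. pose proof (dist_pert_deriv P v i j Hd) as H.
  pose proof (is_derive_inv _ _ _ H) as H2. cbv beta in H2. rewrite dist_pert0 in H2.
  pose proof (is_derive_scal _ _ c _ (H2 ltac:(lra))) as H3.
  eapply is_derive_val. exact H3.
  field. lra.
Qed.

Lemma is_derive_plusR (f g : R -> R) (x a b : R) :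
  is_derive f x a -> is_derive g x b -> is_derive (fun h => f h + g h) x (a + b).
Proof. intros Ha Hb. apply (is_derive_plus f g x a b Ha Hb). Qed.

Definition Ldiag (w03 w13 w02 w14 w24 : R) (P v : config) :=
  w03 * kk (P 0%nat) (P 3%nat) (v 0%nat) (v 3%nat) + w13 * kk (P 1%nat) (P 3%nat) (v 1%nat) (v 3%nat)
  + w02 * kk (P 0%nat) (P 2%nat) (v 0%nat) (v 2%nat) + w14 * kk (P 1%nat) (P 4%nat) (v 1%nat) (v 4%nat)
  + w24 * kk (P 2%nat) (P 4%nat) (v 2%nat) (v 4%nat).

Definition ws q1 q2 q4 s t (P : config) :=
  (q1*q4 / Defs.dist (P 0%nat) (P 3%nat) ^ 3, q2*q4 / Defs.dist (P 1%nat) (P 3%nat) ^ 3,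
   q1*t / Defs.dist (P 0%nat) (P 2%nat) ^ 3, q2*s / Defs.dist (P 1%nat) (P 4%nat) ^ 3,
   s*t / Defs.dist (P 2%nat) (P 4%nat) ^ 3).

Lemma energy_deriv q1 q2 q4 s t (P v : config) :
  0 < Defs.dist (P 0%nat) (P 3%nat) -> 0 < Defs.dist (P 1%nat) (P 3%nat) ->
  0 < Defs.dist (P 0%nat) (P 2%nat) -> 0 < Defs.dist (P 1%nat) (P 4%nat) ->
  0 < Defs.dist (P 2%nat) (P 4%nat) ->
  is_derive (fun h => energy q1 q2 q4 s t (perturb P v h)) 0
   (- Ldiag (q1*q4 / Defs.dist (P 0%nat) (P 3%nat) ^ 3) (q2*q4 / Defs.dist (P 1%nat) (P 3%nat) ^ 3)
   (q1*t / Defs.dist (P 0%nat) (P 2%nat) ^ 3) (q2*s / Defs.dist (P 1%nat) (P 4%nat) ^ 3)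
   (s*t / Defs.dist (P 2%nat) (P 4%nat) ^ 3) P v).
Proof.
  intros H03 H13 H02 H14 H24. unfold energy.
  eapply is_derive_val.
  { apply is_derive_plusR; [apply is_derive_plusR; [apply is_derive_plusR; [apply is_derive_plusR|]|]|].
    all: apply inv_dist_deriv; assumption. }
  unfold Ldiag. ring.
Qed.
Definition Jv (c : R) (u : R*R) : R*R := (- (c * snd u), c * fst u).
Definition ncf (P : config) := cross (vsub (P 3%nat) (P 4%nat)) (vsub (P 2%nat) (P 3%nat)).
Definition mcf (P : config) := cross (vsub (P 2%nat) (P 1%nat)) (vsub (P 2%nat) (P 3%nat)).
Definition vC (P : config) : config := fun i => match i with
  | 2%nat => Jv (ncf P) (vsub (P 2%nat) (P 1%nat))
  | 3%nat => Jv (mcf P) (vsub (P 3%nat) (P 4%nat))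
  | _ => (0,0) end.
Definition mAf (P : config) := cross (vsub (P 4%nat) (P 0%nat)) (vsub (P 3%nat) (P 4%nat)).
Definition nAf (P : config) := cross (vsub (P 3%nat) (P 2%nat)) (vsub (P 3%nat) (P 4%nat)).
Definition vA (P : config) : config := fun i => match i with
  | 3%nat => Jv (mAf P) (vsub (P 3%nat) (P 2%nat))
  | 4%nat => Jv (nAf P) (vsub (P 4%nat) (P 0%nat))
  | _ => (0,0) end.

Lemma vC_tangent P : forall i, (i<5)%nat -> kk (P i) (P (nxt i)) (vC P i) (vC P (nxt i)) = 0.
Proof. intros i Hi. destruct i as [|[|[|[|[|i]]]]]; try lia;
  unfold nxt, kk, vC, Jv, ncf, mcf, cross, vsub; simpl; ring. Qed.
Lemma vA_tangent P : forall i, (i<5)%nat -> kk (P i) (P (nxt i)) (vA P i) (vA P (nxt i)) = 0.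
Proof. intros i Hi. destruct i as [|[|[|[|[|i]]]]]; try lia;
  unfold nxt, kk, vA, Jv, mAf, nAf, cross, vsub; simpl; ring. Qed.

Lemma mul0 a b : a * b = 0 -> b <> 0 -> a = 0.
Proof. intros H Hb. destruct (Rmult_integral _ _ H); auto; contradiction. Qed.

Lemma ex_l (d e : R) : d <> 0 -> exists l, l * d = e.
Proof. intros H. exists (e / d). field. exact H. Qed.

Lemma stress (w03 w13 w02 w14 w24 : R) (P v : config) :
  (forall i, (i<5)%nat -> kk (P i) (P (nxt i)) (v i) (v (nxt i)) = 0) ->
  Ldiag w03 w13 w02 w14 w24 P (vC P) = 0 -> Ldiag w03 w13 w02 w14 w24 P (vA P) = 0 ->
  ncf P <> 0 -> nAf P <> 0 ->
  (fst (P 1%nat) - fst (P 0%nat))^2 + (snd (P 1%nat) - snd (P 0%nat))^2 <> 0 ->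
  (fst (P 2%nat) - fst (P 1%nat))^2 + (snd (P 2%nat) - snd (P 1%nat))^2 <> 0 ->
  (fst (P 4%nat) - fst (P 0%nat))^2 + (snd (P 4%nat) - snd (P 0%nat))^2 <> 0 ->
  Ldiag w03 w13 w02 w14 w24 P v = 0.
Proof.
  intros Hk HC HA Hn Hn' N01 N12 N40.
  pose proof (Hk 0%nat ltac:(lia)) as k0. pose proof (Hk 1%nat ltac:(lia)) as k1.
  pose proof (Hk 2%nat ltac:(lia)) as k2. pose proof (Hk 3%nat ltac:(lia)) as k3.
  pose proof (Hk 4%nat ltac:(lia)) as k4. clear Hk. unfold nxt in *. simpl in k0, k1, k2, k3, k4.
  unfold Ldiag, kk, vC, vA, Jv, ncf, mcf, mAf, nAf, cross, vsub in *. simpl in *.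
  set (x0 := fst (P 0%nat)) in *. set (y0 := snd (P 0%nat)) in *.
  set (x1 := fst (P 1%nat)) in *. set (y1 := snd (P 1%nat)) in *.
  set (x2 := fst (P 2%nat)) in *. set (y2 := snd (P 2%nat)) in *.
  set (x3 := fst (P 3%nat)) in *. set (y3 := snd (P 3%nat)) in *.
  set (x4 := fst (P 4%nat)) in *. set (y4 := snd (P 4%nat)) in *.
  set (a0 := fst (v 0%nat)) in *. set (b0 := snd (v 0%nat)) in *.
  set (a1 := fst (v 1%nat)) in *. set (b1 := snd (v 1%nat)) in *.
  set (a2 := fst (v 2%nat)) in *. set (b2 := snd (v 2%nat)) in *.
  set (a3 := fst (v 3%nat)) in *. set (b3 := snd (v 3%nat)) in *.
  set (a4 := fst (v 4%nat)) in *. set (b4 := snd (v 4%nat)) in *.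
  clearbody x0 y0 x1 y1 x2 y2 x3 y3 x4 y4 a0 b0 a1 b1 a2 b2 a3 b3 a4 b4.
  pose (Rx := w03*(x3-x0) + w13*(x3-x1)). pose (Ry := w03*(y3-y0) + w13*(y3-y1)).
  pose (D3 := (x3-x2)*(y3-y4) - (y3-y2)*(x3-x4)).
  assert (HD3 : D3 <> 0) by exact Hn'.
  destruct (ex_l D3 ((x3-x4)*Ry - (y3-y4)*Rx) HD3) as [l23 H23].
  destruct (ex_l D3 (-((x3-x2)*Ry - (y3-y2)*Rx)) HD3) as [l34 H34].
  pose (F3x := Rx + l23*(x3-x2) + l34*(x3-x4)).
  pose (F3y := Ry + l23*(y3-y2) + l34*(y3-y4)).
  assert (HF3x : F3x = 0).
  { apply (mul0 _ D3); [| exact HD3].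
    replace (F3x*D3) with (Rx*D3 + (l23*D3)*(x3-x2) + (l34*D3)*(x3-x4)) by (unfold F3x; ring).
    rewrite H23, H34. unfold D3, Rx, Ry; ring. }
  assert (HF3y : F3y = 0).
  { apply (mul0 _ D3); [| exact HD3].
    replace (F3y*D3) with (Ry*D3 + (l23*D3)*(y3-y2) + (l34*D3)*(y3-y4)) by (unfold F3y; ring).
    rewrite H23, H34. unfold D3, Rx, Ry; ring. }
  pose (G2x := w02*(x2-x0) + w24*(x2-x4) + l23*(x2-x3)).
  pose (G2y := w02*(y2-y0) + w24*(y2-y4) + l23*(y2-y3)).
  pose (n := (x3-x4)*(y2-y3) - (y3-y4)*(x2-x3)).
  pose (m := (x2-x1)*(y2-y3) - (y2-y1)*(x2-x3)).
  pose (cG2 := (x2-x1)*G2y - (y2-y1)*G2x).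
  pose (PhiC := w03 *
    ((x0 - x3) *
     (0 - - (((x2 - x1) * (y2 - y3) - (y2 - y1) * (x2 - x3)) * (y3 - y4))) +
     (y0 - y3) *
     (0 - ((x2 - x1) * (y2 - y3) - (y2 - y1) * (x2 - x3)) * (x3 - x4))) +
    w13 *
    ((x1 - x3) *
     (0 - - (((x2 - x1) * (y2 - y3) - (y2 - y1) * (x2 - x3)) * (y3 - y4))) +
     (y1 - y3) *
     (0 - ((x2 - x1) * (y2 - y3) - (y2 - y1) * (x2 - x3)) * (x3 - x4))) +
    w02 *
    ((x0 - x2) *
     (0 - - (((x3 - x4) * (y2 - y3) - (y3 - y4) * (x2 - x3)) * (y2 - y1))) +
     (y0 - y2) *
     (0 - ((x3 - x4) * (y2 - y3) - (y3 - y4) * (x2 - x3)) * (x2 - x1))) +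
    w14 * ((x1 - x4) * (0 - 0) + (y1 - y4) * (0 - 0)) +
    w24 *
    ((x2 - x4) *
     (- (((x3 - x4) * (y2 - y3) - (y3 - y4) * (x2 - x3)) * (y2 - y1)) - 0) +
     (y2 - y4) *
     (((x3 - x4) * (y2 - y3) - (y3 - y4) * (x2 - x3)) * (x2 - x1) - 0))).
  fold PhiC in HC.
  assert (HcG2 : cG2 = 0).
  { apply (mul0 _ n); [| exact Hn].
    replace (cG2 * n) with (PhiC - ((-(m*(y3-y4)))*F3x + (m*(x3-x4))*F3y))
      by (unfold PhiC, cG2, F3x, F3y, G2x, G2y, n, m, Rx, Ry; ring).
    rewrite HC, HF3x, HF3y. ring. }
  pose (N12' := (x2-x1)^2 + (y2-y1)^2).
  assert (HN12 : N12' <> 0) by (unfold N12'; replace ((x2-x1)^2 + (y2-y1)^2) with ((x2 - x1) * ((x2 - x1) * 1) + (y2 - y1) * ((y2 - y1) * 1)) by ring; exact N12).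
  destruct (ex_l N12' (-(G2x*(x2-x1)+G2y*(y2-y1))) HN12) as [l12 H12].
  pose (F2x := G2x + l12*(x2-x1)). pose (F2y := G2y + l12*(y2-y1)).
  assert (HF2x : F2x = 0).
  { apply (mul0 _ N12'); [| exact HN12].
    replace (F2x*N12') with (G2x*N12' + (l12*N12')*(x2-x1)) by (unfold F2x; ring).
    rewrite H12. replace (G2x * N12' + - (G2x * (x2 - x1) + G2y * (y2 - y1)) * (x2 - x1)) with (-(y2-y1)*cG2) by (unfold cG2, N12'; ring).
    rewrite HcG2; ring. }
  assert (HF2y : F2y = 0).
  { apply (mul0 _ N12'); [| exact HN12].
    replace (F2y*N12') with (G2y*N12' + (l12*N12')*(y2-y1)) by (unfold F2y; ring).
    rewrite H12. replace (G2y * N12' + - (G2x * (x2 - x1) + G2y * (y2 - y1)) * (y2 - y1)) with ((x2-x1)*cG2) by (unfold cG2, N12'; ring).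
    rewrite HcG2; ring. }
  pose (G4x := w14*(x4-x1) + w24*(x4-x2) + l34*(x4-x3)).
  pose (G4y := w14*(y4-y1) + w24*(y4-y2) + l34*(y4-y3)).
  pose (m' := (x4-x0)*(y3-y4) - (y4-y0)*(x3-x4)).
  pose (cG4 := (x4-x0)*G4y - (y4-y0)*G4x).
  pose (PhiA := w03 *
    ((x0 - x3) *
     (0 - - (((x4 - x0) * (y3 - y4) - (y4 - y0) * (x3 - x4)) * (y3 - y2))) +
     (y0 - y3) *
     (0 - ((x4 - x0) * (y3 - y4) - (y4 - y0) * (x3 - x4)) * (x3 - x2))) +
    w13 *
    ((x1 - x3) *
     (0 - - (((x4 - x0) * (y3 - y4) - (y4 - y0) * (x3 - x4)) * (y3 - y2))) +
     (y1 - y3) *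
     (0 - ((x4 - x0) * (y3 - y4) - (y4 - y0) * (x3 - x4)) * (x3 - x2))) +
    w02 * ((x0 - x2) * (0 - 0) + (y0 - y2) * (0 - 0)) +
    w14 *
    ((x1 - x4) *
     (0 - - (((x3 - x2) * (y3 - y4) - (y3 - y2) * (x3 - x4)) * (y4 - y0))) +
     (y1 - y4) *
     (0 - ((x3 - x2) * (y3 - y4) - (y3 - y2) * (x3 - x4)) * (x4 - x0))) +
    w24 *
    ((x2 - x4) *
     (0 - - (((x3 - x2) * (y3 - y4) - (y3 - y2) * (x3 - x4)) * (y4 - y0))) +
     (y2 - y4) *
     (0 - ((x3 - x2) * (y3 - y4) - (y3 - y2) * (x3 - x4)) * (x4 - x0)))).
  fold PhiA in HA.
  assert (HcG4 : cG4 = 0).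
  { apply (mul0 _ D3); [| exact HD3].
    replace (cG4 * D3) with (PhiA - ((-(m'*(y3-y2)))*F3x + (m'*(x3-x2))*F3y))
      by (unfold PhiA, cG4, F3x, F3y, G4x, G4y, D3, m', Rx, Ry; ring).
    rewrite HA, HF3x, HF3y. ring. }
  pose (N40' := (x4-x0)^2 + (y4-y0)^2).
  assert (HN40 : N40' <> 0) by (unfold N40'; replace ((x4-x0)^2 + (y4-y0)^2) with ((x4 - x0) * ((x4 - x0) * 1) + (y4 - y0) * ((y4 - y0) * 1)) by ring; exact N40).
  destruct (ex_l N40' (-(G4x*(x4-x0)+G4y*(y4-y0))) HN40) as [l40 H40].
  pose (F4x := G4x + l40*(x4-x0)). pose (F4y := G4y + l40*(y4-y0)).
  assert (HF4x : F4x = 0).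
  { apply (mul0 _ N40'); [| exact HN40].
    replace (F4x*N40') with (G4x*N40' + (l40*N40')*(x4-x0)) by (unfold F4x; ring).
    rewrite H40. replace (G4x * N40' + - (G4x * (x4 - x0) + G4y * (y4 - y0)) * (x4 - x0)) with (-(y4-y0)*cG4) by (unfold cG4, N40'; ring).
    rewrite HcG4; ring. }
  assert (HF4y : F4y = 0).
  { apply (mul0 _ N40'); [| exact HN40].
    replace (F4y*N40') with (G4y*N40' + (l40*N40')*(y4-y0)) by (unfold F4y; ring).
    rewrite H40. replace (G4y * N40' + - (G4x * (x4 - x0) + G4y * (y4 - y0)) * (y4 - y0)) with ((x4-x0)*cG4) by (unfold cG4, N40'; ring).
    rewrite HcG4; ring. }
  pose (F0x := l40*(x0-x4) + w02*(x0-x2) + w03*(x0-x3)).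
  pose (F0y := l40*(y0-y4) + w02*(y0-y2) + w03*(y0-y3)).
  pose (N01' := (x0-x1)^2 + (y0-y1)^2).
  assert (HN01 : N01' <> 0) by (unfold N01'; replace ((x0-x1)^2 + (y0-y1)^2) with ((x1 - x0) * ((x1 - x0) * 1) + (y1 - y0) * ((y1 - y0) * 1)) by ring; exact N01).
  pose (cw := (x0-x1)*(b0-b1) - (y0-y1)*(a0-a1)).
  pose (K0 := (x0 - x1) * (a0 - a1) + (y0 - y1) * (b0 - b1)). fold K0 in k0.
  pose (K1 := (x1 - x2) * (a1 - a2) + (y1 - y2) * (b1 - b2)). fold K1 in k1.
  pose (K2 := (x2 - x3) * (a2 - a3) + (y2 - y3) * (b2 - b3)). fold K2 in k2.
  pose (K3 := (x3 - x4) * (a3 - a4) + (y3 - y4) * (b3 - b4)). fold K3 in k3.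
  pose (K4 := (x4 - x0) * (a4 - a0) + (y4 - y0) * (b4 - b0)). fold K4 in k4.
  apply (mul0 _ N01'); [| exact HN01].
  match goal with |- ?A * _ = 0 => replace (A * N01') with
    (((x0-x1)*F0x + (y0-y1)*F0y)*K0 - N01'*(l12*K1 + l23*K2 + l34*K3 + l40*K4)
     + (N01'*(a2-a1) + cw*(y2-y1))*F2x + (N01'*(b2-b1) - cw*(x2-x1))*F2y
     + (N01'*(a3-a1) + cw*(y3-y1))*F3x + (N01'*(b3-b1) - cw*(x3-x1))*F3y
     + (N01'*(a4-a1) + cw*(y4-y1))*F4x + (N01'*(b4-b1) - cw*(x4-x1))*F4y) end.
  2:{ unfold K0, K1, K2, K3, K4, F0x, F0y, F2x, F2y, F3x, F3y, F4x, F4y, G2x, G2y, G4x, G4y, Rx, Ry, N01', cw. ring. }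
  rewrite k0, k1, k2, k3, k4, HF2x, HF2y, HF3x, HF3y, HF4x, HF4y. ring.
Qed.
Lemma qroot_uniq a b c x y : 0 < a -> c < 0 -> 0 < x -> 0 < y ->
  a*x^2 + b*x + c = 0 -> a*y^2 + b*y + c = 0 -> x = y.
Proof.
  intros Ha Hc Hx Hy E1 E2.
  destruct (Req_dec x y) as [|Hne]; auto. exfalso.
  assert (E3 : (x - y) * (a*(x+y) + b) = 0) by (replace ((x - y) * (a*(x+y) + b)) with ((a*x^2+b*x+c) - (a*y^2+b*y+c)) by ring; rewrite E1, E2; ring).
  assert (E4 : a*(x+y) + b = 0).
  { destruct (Rmult_integral _ _ E3) as [h|h]; auto. exfalso; apply Hne; lra. }
  assert (E5 : c = a*x*y).
  { replace b with (-(a*(x+y))) in E1 by lra. lra. }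
  assert (0 < a*x*y) by (apply Rmult_lt_0_compat; [apply Rmult_lt_0_compat|]; lra).
  lra.
Qed.

Lemma quad A B C A' B' D : 0<A -> 0<B -> 0<C -> 0<A' -> 0<B' -> 0<D ->
  exists s t, (0<s /\ 0<t /\ t*(A+B*s) = C /\ s*(A'+B'*t) = D) /\
    forall s' t', 0<s' -> 0<t' -> t'*(A+B*s') = C -> s'*(A'+B'*t') = D -> s' = s /\ t' = t.
Proof.
  intros HA HB HC HA' HB' HD.
  set (a := A'*B). set (b := A'*A + B'*C - D*B). set (c := -(D*A)).
  assert (Ha : 0 < a) by (apply Rmult_lt_0_compat; lra).
  assert (Hc : c < 0) by (unfold c; assert (0 < D*A) by (apply Rmult_lt_0_compat; lra); lra).
  set (Dl := b^2 - 4*a*c).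
  assert (HDl : b^2 < Dl) by (unfold Dl; assert (0 < a * (-c)) by (apply Rmult_lt_0_compat; lra); nra).
  set (r := sqrt Dl).
  assert (Hr2 : r*r = Dl) by (unfold r; apply sqrt_sqrt; nra).
  assert (Hr0 : 0 <= r) by (unfold r; apply sqrt_pos).
  assert (Hrb : b < r) by nra.
  set (s := (r - b) / (2*a)).
  assert (Hs : 0 < s) by (unfold s; apply Rdiv_lt_0_compat; lra).
  assert (Hq : a*s^2 + b*s + c = 0).
  { assert (E : 2*a*s + b = r) by (unfold s; field; lra).
    apply (mul0 _ (4*a)); [| lra].
    replace ((a*s^2 + b*s + c) * (4*a)) with ((2*a*s+b)^2 - Dl) by (unfold Dl; ring).
    rewrite E. rewrite <- Hr2. ring. }
  assert (HAB : 0 < A + B*s) by (assert (0 < B*s) by (apply Rmult_lt_0_compat; lra); lra).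
  set (t := C / (A + B*s)).
  assert (Ht : 0 < t) by (unfold t; apply Rdiv_lt_0_compat; lra).
  assert (key : forall s' t', 0 < s' -> 0 < t' -> t'*(A+B*s') = C ->
     (s'*(A'+B'*t') = D <-> a*s'^2 + b*s' + c = 0)).
  { intros s' t' Hs' Ht' E1.
    assert (HAB' : 0 < A + B*s') by (assert (0 < B*s') by (apply Rmult_lt_0_compat; lra); lra).
    split; intros E2.
    - replace (a*s'^2 + b*s' + c) with (s'*(A'+B'*t')*(A+B*s') - D*(A+B*s') + B'*s'*(C - t'*(A+B*s'))) by (unfold a, b, c; ring).
      rewrite E2, E1. ring.
    - cut (s'*(A'+B'*t') - D = 0); [lra|].
      apply (mul0 _ (A+B*s')); [| lra].
      replace ((s'*(A'+B'*t') - D) * (A+B*s')) with ((a*s'^2 + b*s' + c) - B'*s'*(C - t'*(A+B*s'))) by (unfold a, b, c; ring).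
      rewrite E2, E1. ring. }
  assert (Et : t*(A+B*s) = C) by (unfold t; field; lra).
  exists s, t. split.
  - repeat split; auto. apply (key s t); auto.
  - intros s' t' Hs' Ht' E1 E2.
    assert (Hq' : a*s'^2 + b*s' + c = 0) by (apply (key s' t'); auto).
    assert (Ess : s' = s) by (apply (qroot_uniq a b c); auto).
    split; auto. subst s'.
    unfold t. rewrite <- E1. field. lra.
Qed.

Lemma crit_iff q1 q2 q4 s t (P : config) :
  (forall i, (i<5)%nat -> 0 < Defs.dist (P i) (P (nxt i))) ->
  0 < Defs.dist (P 0%nat) (P 3%nat) -> 0 < Defs.dist (P 1%nat) (P 3%nat) ->
  0 < Defs.dist (P 0%nat) (P 2%nat) -> 0 < Defs.dist (P 1%nat) (P 4%nat) ->
  0 < Defs.dist (P 2%nat) (P 4%nat) ->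
  (critical_on_linkage (energy q1 q2 q4 s t) P <->
   forall v : config, (forall i, (i<5)%nat -> kk (P i) (P (nxt i)) (v i) (v (nxt i)) = 0) ->
     Ldiag (q1*q4 / Defs.dist (P 0%nat) (P 3%nat) ^ 3) (q2*q4 / Defs.dist (P 1%nat) (P 3%nat) ^ 3)
       (q1*t / Defs.dist (P 0%nat) (P 2%nat) ^ 3) (q2*s / Defs.dist (P 1%nat) (P 4%nat) ^ 3)
       (s*t / Defs.dist (P 2%nat) (P 4%nat) ^ 3) P v = 0).
Proof.
  intros Hs H03 H13 H02 H14 H24. split.
  - intros Hc v Hk.
    assert (Hd : forall i, (i < 5)%nat ->
       is_derive (fun h => Defs.dist (perturb P v h i) (perturb P v h (nxt i))) 0 0).
    { intros i Hi. eapply is_derive_val. apply dist_pert_deriv. apply Hs; auto.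
      rewrite Hk; auto. unfold Rdiv; ring. }
    pose proof (Hc v Hd) as H1.
    pose proof (energy_deriv q1 q2 q4 s t P v H03 H13 H02 H14 H24) as H2.
    apply is_derive_unique in H1. apply is_derive_unique in H2.
    rewrite H1 in H2. lra.
  - intros H v Hd.
    eapply is_derive_val. apply (energy_deriv q1 q2 q4 s t P v H03 H13 H02 H14 H24).
    rewrite H; [ring|].
    intros i Hi. pose proof (Hd i Hi) as H1.
    pose proof (dist_pert_deriv P v i (nxt i) (Hs i Hi)) as H2.
    apply is_derive_unique in H1. apply is_derive_unique in H2.
    rewrite H1 in H2. pose proof (Hs i Hi).
    apply (mul0 _ (/ Defs.dist (P i) (P (nxt i)))).
    + rewrite H2. reflexivity.
    + apply Rinv_neq_0_compat. lra.
Qed.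

Lemma sq2_zero a b : a^2 + b^2 <= 0 -> a = 0 /\ b = 0.
Proof.
  intros h. pose proof (pow2_ge_0 a). pose proof (pow2_ge_0 b).
  assert (Ea : a^2 = 0) by lra. assert (Eb : b^2 = 0) by lra.
  replace (a^2) with (a*a) in Ea by ring. replace (b^2) with (b*b) in Eb by ring.
  split; [destruct (Rmult_integral _ _ Ea) | destruct (Rmult_integral _ _ Eb)]; auto.
Qed.

Definition cc (P : config) i j k := cross (vsub (P j) (P i)) (vsub (P k) (P i)).

Lemma dist_pos_cross p q r : cross (vsub q p) (vsub r p) <> 0 -> 0 < Defs.dist p r.
Proof.
  destruct p as [px py], q as [qx qy], r as [rx ry].
  intros H. unfold Defs.dist. apply sqrt_lt_R0. simpl in *.
  destruct (Rlt_or_le 0 ((px - rx)^2 + (py - ry)^2)) as [h|h]; auto.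
  exfalso. apply H. unfold cross, vsub; simpl.
  destruct (sq2_zero _ _ h) as [E1 E2].
  replace rx with px by lra. replace ry with py by lra. ring.
Qed.

Lemma norm_nz_cross p q r : cross (vsub q p) (vsub r p) <> 0 ->
  (fst q - fst p)^2 + (snd q - snd p)^2 <> 0.
Proof.
  destruct p as [px py], q as [qx qy], r as [rx ry]. simpl.
  intros H E. apply H. unfold cross, vsub; simpl.
  destruct (sq2_zero (qx - px) (qy - py)) as [E1 E2]; [lra|].
  replace qx with px by lra. replace qy with py by lra. ring.
Qed.

Lemma prodpos sg a b : (sg = 1 \/ sg = -1) -> 0 < sg*a -> 0 < sg*b -> 0 < a*b.
Proof. intros [->| ->] Ha Hb; nra. Qed.

Lemma nz_of sg a : 0 < sg*a -> a <> 0.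
Proof. intros H E. rewrite E in H. lra. Qed.

Lemma divpos a d : 0 < a -> 0 < d -> 0 < a / d ^ 3.
Proof. intros. apply Rdiv_lt_0_compat; auto. apply pow_lt; auto. Qed.

Ltac getc H i j := exact (H i j ltac:(lia) ltac:(lia) ltac:(lia) ltac:(unfold nxt; simpl; lia)).

Theorem theorem3 (a : nat -> R) (q1 q2 q4 : R) (P : config) :
  (forall i, (i < 5)%nat -> 0 < a i) ->
  0 < q1 -> 0 < q2 -> 0 < q4 ->
  in_linkage a P -> strictly_convex P ->
  exists s t : R, (0 < s /\ 0 < t /\ critical_on_linkage (energy q1 q2 q4 s t) P) /\
    forall s' t' : R, 0 < s' -> 0 < t' ->
      critical_on_linkage (energy q1 q2 q4 s' t') P -> s' = s /\ t' = t.
Proof.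
  intros Ha Hq1 Hq2 Hq4 Hlink [sg [Hsg Hcv]].
  assert (Hs : forall i, (i<5)%nat -> 0 < Defs.dist (P i) (P (nxt i))).
  { intros i Hi. rewrite (Hlink i Hi). apply Ha; auto. }
  assert (c012 : 0 < sg * cc P 0 1 2) by getc Hcv 0%nat 2%nat.
  assert (c013 : 0 < sg * cc P 0 1 3) by getc Hcv 0%nat 3%nat.
  assert (c120 : 0 < sg * cc P 1 2 0) by getc Hcv 1%nat 0%nat.
  assert (c123 : 0 < sg * cc P 1 2 3) by getc Hcv 1%nat 3%nat.
  assert (c124 : 0 < sg * cc P 1 2 4) by getc Hcv 1%nat 4%nat.
  assert (c230 : 0 < sg * cc P 2 3 0) by getc Hcv 2%nat 0%nat.
  assert (c231 : 0 < sg * cc P 2 3 1) by getc Hcv 2%nat 1%nat.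
  assert (c234 : 0 < sg * cc P 2 3 4) by getc Hcv 2%nat 4%nat.
  assert (c340 : 0 < sg * cc P 3 4 0) by getc Hcv 3%nat 0%nat.
  assert (c341 : 0 < sg * cc P 3 4 1) by getc Hcv 3%nat 1%nat.
  assert (c342 : 0 < sg * cc P 3 4 2) by getc Hcv 3%nat 2%nat.
  assert (c401 : 0 < sg * cc P 4 0 1) by getc Hcv 4%nat 1%nat.
  assert (c402 : 0 < sg * cc P 4 0 2) by getc Hcv 4%nat 2%nat.
  assert (c403 : 0 < sg * cc P 4 0 3) by getc Hcv 4%nat 3%nat.
  assert (H03 : 0 < Defs.dist (P 0%nat) (P 3%nat)) by (apply (dist_pos_cross _ (P 1%nat)); exact (nz_of _ _ c013)).
  assert (H13 : 0 < Defs.dist (P 1%nat) (P 3%nat)) by (apply (dist_pos_cross _ (P 2%nat)); exact (nz_of _ _ c123)).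
  assert (H02 : 0 < Defs.dist (P 0%nat) (P 2%nat)) by (apply (dist_pos_cross _ (P 1%nat)); exact (nz_of _ _ c012)).
  assert (H14 : 0 < Defs.dist (P 1%nat) (P 4%nat)) by (apply (dist_pos_cross _ (P 2%nat)); exact (nz_of _ _ c124)).
  assert (H24 : 0 < Defs.dist (P 2%nat) (P 4%nat)) by (apply (dist_pos_cross _ (P 3%nat)); exact (nz_of _ _ c234)).
  assert (N01 : (fst (P 1%nat) - fst (P 0%nat))^2 + (snd (P 1%nat) - snd (P 0%nat))^2 <> 0)
    by (apply (norm_nz_cross _ _ (P 2%nat)); exact (nz_of _ _ c012)).
  assert (N12 : (fst (P 2%nat) - fst (P 1%nat))^2 + (snd (P 2%nat) - snd (P 1%nat))^2 <> 0)
    by (apply (norm_nz_cross _ _ (P 3%nat)); exact (nz_of _ _ c123)).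
  assert (N40 : (fst (P 4%nat) - fst (P 0%nat))^2 + (snd (P 4%nat) - snd (P 0%nat))^2 <> 0).
  { pose proof (norm_nz_cross _ _ (P 1%nat) (nz_of _ _ c401)) as h. intro E. apply h.
    replace ((fst (P 0%nat) - fst (P 4%nat))^2 + (snd (P 0%nat) - snd (P 4%nat))^2) with ((fst (P 4%nat) - fst (P 0%nat))^2 + (snd (P 4%nat) - snd (P 0%nat))^2) by ring. exact E. }
  assert (Hn : ncf P <> 0).
  { replace (ncf P) with (- cc P 3 4 2) by (unfold ncf, cc, cross, vsub; simpl; ring).
    pose proof (nz_of _ _ c342). lra. }
  assert (Hn' : nAf P <> 0).
  { replace (nAf P) with (- cc P 2 3 4) by (unfold nAf, cc, cross, vsub; simpl; ring).
    pose proof (nz_of _ _ c234). lra. }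
  set (d03 := Defs.dist (P 0%nat) (P 3%nat)) in *.
  set (d13 := Defs.dist (P 1%nat) (P 3%nat)) in *.
  set (d02 := Defs.dist (P 0%nat) (P 2%nat)) in *.
  set (d14 := Defs.dist (P 1%nat) (P 4%nat)) in *.
  set (d24 := Defs.dist (P 2%nat) (P 4%nat)) in *.
  assert (KC02 : kk (P 0%nat) (P 2%nat) (vC P 0%nat) (vC P 2%nat) = cc P 3 4 2 * cc P 1 2 0)
    by (unfold kk, vC, Jv, ncf, mcf, cc, cross, vsub; simpl; ring).
  assert (KC24 : kk (P 2%nat) (P 4%nat) (vC P 2%nat) (vC P 4%nat) = cc P 3 4 2 * cc P 1 2 4)
    by (unfold kk, vC, Jv, ncf, mcf, cc, cross, vsub; simpl; ring).
  assert (KC03 : kk (P 0%nat) (P 3%nat) (vC P 0%nat) (vC P 3%nat) = - (cc P 1 2 3 * cc P 3 4 0))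
    by (unfold kk, vC, Jv, ncf, mcf, cc, cross, vsub; simpl; ring).
  assert (KC13 : kk (P 1%nat) (P 3%nat) (vC P 1%nat) (vC P 3%nat) = - (cc P 1 2 3 * cc P 3 4 1))
    by (unfold kk, vC, Jv, ncf, mcf, cc, cross, vsub; simpl; ring).
  assert (KC14 : kk (P 1%nat) (P 4%nat) (vC P 1%nat) (vC P 4%nat) = 0)
    by (unfold kk, vC; simpl; ring).
  assert (KA03 : kk (P 0%nat) (P 3%nat) (vA P 0%nat) (vA P 3%nat) = cc P 4 0 3 * cc P 2 3 0)
    by (unfold kk, vA, Jv, nAf, mAf, cc, cross, vsub; simpl; ring).
  assert (KA13 : kk (P 1%nat) (P 3%nat) (vA P 1%nat) (vA P 3%nat) = cc P 4 0 3 * cc P 2 3 1)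
    by (unfold kk, vA, Jv, nAf, mAf, cc, cross, vsub; simpl; ring).
  assert (KA14 : kk (P 1%nat) (P 4%nat) (vA P 1%nat) (vA P 4%nat) = - (cc P 2 3 4 * cc P 4 0 1))
    by (unfold kk, vA, Jv, nAf, mAf, cc, cross, vsub; simpl; ring).
  assert (KA24 : kk (P 2%nat) (P 4%nat) (vA P 2%nat) (vA P 4%nat) = - (cc P 2 3 4 * cc P 4 0 2))
    by (unfold kk, vA, Jv, nAf, mAf, cc, cross, vsub; simpl; ring).
  assert (KA02 : kk (P 0%nat) (P 2%nat) (vA P 0%nat) (vA P 2%nat) = 0)
    by (unfold kk, vA; simpl; ring).
  pose proof (prodpos _ _ _ Hsg c342 c120) as p1.
  pose proof (prodpos _ _ _ Hsg c342 c124) as p2.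
  pose proof (prodpos _ _ _ Hsg c123 c340) as p3.
  pose proof (prodpos _ _ _ Hsg c123 c341) as p4.
  pose proof (prodpos _ _ _ Hsg c403 c230) as p5.
  pose proof (prodpos _ _ _ Hsg c403 c231) as p6.
  pose proof (prodpos _ _ _ Hsg c234 c401) as p7.
  pose proof (prodpos _ _ _ Hsg c234 c402) as p8.
  set (A := q1 / d02^3 * (cc P 3 4 2 * cc P 1 2 0)).
  set (B := 1 / d24^3 * (cc P 3 4 2 * cc P 1 2 4)).
  set (C := q1*q4 / d03^3 * (cc P 1 2 3 * cc P 3 4 0) + q2*q4 / d13^3 * (cc P 1 2 3 * cc P 3 4 1)).
  set (A' := q2 / d14^3 * (cc P 2 3 4 * cc P 4 0 1)).
  set (B' := 1 / d24^3 * (cc P 2 3 4 * cc P 4 0 2)).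
  set (D := q1*q4 / d03^3 * (cc P 4 0 3 * cc P 2 3 0) + q2*q4 / d13^3 * (cc P 4 0 3 * cc P 2 3 1)).
  assert (HA : 0 < A) by (apply Rmult_lt_0_compat; auto; apply divpos; auto).
  assert (HB : 0 < B) by (apply Rmult_lt_0_compat; auto; apply divpos; lra).
  assert (HC : 0 < C).
  { apply Rplus_lt_0_compat; apply Rmult_lt_0_compat; auto; apply divpos; auto; apply Rmult_lt_0_compat; auto. }
  assert (HA' : 0 < A') by (apply Rmult_lt_0_compat; auto; apply divpos; auto).
  assert (HB' : 0 < B') by (apply Rmult_lt_0_compat; auto; apply divpos; lra).
  assert (HD : 0 < D).
  { apply Rplus_lt_0_compat; apply Rmult_lt_0_compat; auto; apply divpos; auto; apply Rmult_lt_0_compat; auto. }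
  assert (Hiff : forall s t, critical_on_linkage (energy q1 q2 q4 s t) P <->
            (t*(A+B*s) = C /\ s*(A'+B'*t) = D)).
  { intros s t. rewrite (crit_iff q1 q2 q4 s t P Hs H03 H13 H02 H14 H24).
    assert (IC : Ldiag (q1*q4 / d03 ^ 3) (q2*q4 / d13 ^ 3) (q1*t / d02 ^ 3) (q2*s / d14 ^ 3)
       (s*t / d24 ^ 3) P (vC P) = t*(A+B*s) - C).
    { unfold Ldiag. rewrite KC02, KC24, KC03, KC13, KC14. unfold A, B, C. unfold Rdiv. ring. }
    assert (IA : Ldiag (q1*q4 / d03 ^ 3) (q2*q4 / d13 ^ 3) (q1*t / d02 ^ 3) (q2*s / d14 ^ 3)
       (s*t / d24 ^ 3) P (vA P) = D - s*(A'+B'*t)).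
    { unfold Ldiag. rewrite KA02, KA24, KA03, KA13, KA14. unfold A', B', D. unfold Rdiv. ring. }
    split.
    - intros H. pose proof (H (vC P) (vC_tangent P)) as E1. pose proof (H (vA P) (vA_tangent P)) as E2.
      assert (E1' : t*(A+B*s) - C = 0) by (rewrite <- IC; exact E1).
      assert (E2' : D - s*(A'+B'*t) = 0) by (rewrite <- IA; exact E2). split; lra.
    - intros [E1 E2] v Hv. apply stress; auto.
      + transitivity (t*(A+B*s) - C); [exact IC | lra].
      + transitivity (D - s*(A'+B'*t)); [exact IA | lra]. }
  destruct (quad A B C A' B' D HA HB HC HA' HB' HD) as [s [t [[Hs0 [Ht0 [E1 E2]]] Huniq]]].
  exists s, t. split.
  - split; [exact Hs0|]. split; [exact Ht0|]. apply Hiff. split; assumption.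
  - intros s' t' Hs' Ht' Hc. apply Hiff in Hc. destruct Hc. apply Huniq; auto.
Qed.
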